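(* Let $p$ be a prime, $a\in\mathbb{N}\setminus p\mathbb{Z}$ and $n\in\mathbb{N}$. If the element $\pi_n(a)=a+p^n\mathbb{Z}$ has order at least $\max\{p,3\}$ in the multiplicative group $\mathbb{Z}_{p^n}^\times$, then $\overline{a^{\mathbb{N}}}=\pi_n^{-1}(\pi_n(a)^{\mathbb{N}})$, where the closure is taken in the $p$-adic topology on $\mathbb{N}\setminus p\mathbb{N}$.
   Context: $\mathbb{N}=\{1,2,\dots\}$, $\mathbb{N}_0=\{0\}\cup\mathbb{N}$. For $x\in\mathbb{N}$, $x^{\mathbb{N}}=\{x^k:k\in\mathbb{N}\}$, and for an element $g$ of a group, $g^{\mathbb{N}}=\{g^k:k\in\mathbb{N}\}$. $\mathbb{Z}_{p^n}=\mathbb{Z}/p^n\mathbb{Z}$, $\mathbb{Z}_{p^n}^\times$ its group of units, and $\pi_n:\mathbb{N}\to\mathbb{Z}_{p^n}$, $x\mapsto x+p^n\mathbb{Z}$. The $p$-adic topology on $\mathbb{N}\setminus p\mathbb{N}$ is generated by the sets $x+p^m\mathbb{N}_0$ with $x,m\in\mathbb{N}$. *)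

(* Defs.v *)
From mathcomp Require Import all_boot all_order all_algebra all_fingroup.
Set Implicit Arguments. Unset Strict Implicit. Unset Printing Implicit Defensive.
Import GRing.Theory.

(* pi_n : N -> Z_{p^n},  x |-> x + p^n Z   (used with m = p^n >= 2) *)
Definition pi_mod (m x : nat) : 'Z_m := (x%:R)%R.

(* Order of pi_m(a) in the multiplicative group Z_m^x  (0 if not a unit). *)
Definition unit_order (m a : nat) : nat :=
  if insub (pi_mod m a) is Some u then #[u : {unit 'Z_m}]%g else 0.

Definition padic_ball (p x m : nat) (y : nat) : Prop :=
  x <= y /\ y = x %[mod p ^ m].

(* Closure of S in the p-adic topology on N \ pN (topology generated by the
   basic sets x + p^m N_0, x, m in N, which form a base): y is in the closure
   iff y is in N \ pN and every basic set containing y meets S. *)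
Definition padic_closure (p : nat) (S : nat -> Prop) (y : nat) : Prop :=
  0 < y /\ ~~ (p %| y) /\
  forall x m, 0 < x -> 0 < m -> padic_ball p x m y ->
    exists s, S s /\ padic_ball p x m s.

(* Main.v *)
Require Import Defs.
From mathcomp Require Import all_boot all_order all_algebra all_fingroup.
From mathcomp Require Import cyclic ring zify.
Import GRing.Theory Num.Theory.
Section Helpers.
Local Open Scope ring_scope.

Lemma binom2 (x : int) (r : nat) : exists z : int, (1 + x) ^+ r = 1 + x * r%:R + x ^+ 2 * z.
Proof.
elim: r => [|r [z IH]]; first by exists 0; ring.
exists (r%:R + z + z * x); rewrite exprS IH; ring.
Qed.

Lemma binom3 (x : int) (r : nat) :
  exists z : int, (1 + x) ^+ r = 1 + x * r%:R + x ^+ 2 * ('C(r, 2))%:R + x ^+ 3 * z.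
Proof.
elim: r => [|r [z IH]]; first by exists 0; rewrite bin0n /=; ring.
exists ('C(r, 2)%:R + z + z * x); rewrite exprS IH binS bin1 natrD; ring.
Qed.

Lemma dvdz_prime_mul (p : nat) (a b : int) : prime p ->
  (p%:Z %| a * b)%Z = (p%:Z %| a)%Z || (p%:Z %| b)%Z.
Proof. by move=> pp; rewrite !dvdzE abszM Euclid_dvdM. Qed.

Lemma dvdz_prime_exp (p : nat) (a : int) n : prime p -> ~~ (p%:Z %| a)%Z ->
  ~~ (p%:Z %| a ^+ n)%Z.
Proof. by move=> pp; rewrite !dvdzE abszX Euclid_dvdX // => /negbTE->. Qed.

Lemma lte_step (p i : nat) (c t : int) : prime p -> (0 < i)%N -> (2 < p)%N || (1 < i)%N ->
  c = 1 + p%:Z ^+ i * t -> ~~ (p%:Z %| t)%Z ->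
  exists2 t' : int, c ^+ p = 1 + p%:Z ^+ i.+1 * t' & ~~ (p%:Z %| t')%Z.
Proof.
move=> pp; case: i => [//|i0] _ cond -> nt.
set P := p%:Z.
have [z Ez] := binom3 (P ^+ i0.+1 * t) p.
suff [q Eq] : exists q, P ^+ 2 * (P ^+ i0 * t) ^+ 2 * ('C(p, 2))%:R = P ^+ 3 * P ^+ i0 * q.
  exists (t + P * (q + P ^+ i0 * P ^+ i0 * t ^+ 3 * z)).
    rewrite Ez.
    have -> : (P ^+ i0.+1 * t) ^+ 2 * 'C(p, 2)%:R = P ^+ 3 * P ^+ i0 * q.
      by rewrite -Eq (exprS P i0); ring.
    rewrite !exprS.
    rewrite natz /P; ring.
  apply: contra nt => /dvdzP [w Ew]; apply/dvdzP; exists (w - (q + P ^+ i0 * P ^+ i0 * t ^+ 3 * z)).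
  by rewrite mulrBl -Ew; ring.
case/orP: cond => [p2|i1].
  have /dvdnP [c' Ec] : (p %| 'C(p, 2))%N by apply: prime_dvd_bin => //; rewrite p2.
  exists (c'%:R * P ^+ i0 * t ^+ 2); rewrite Ec natrM.
  rewrite natz.
  ring.
clear Ez z; case: i0 i1 => [//|i1] _.
exists ('C(p, 2)%:R * P ^+ i1 * t ^+ 2); rewrite !exprS; ring.
Qed.

Lemma lte_iter (p i : nat) (c t : int) : prime p -> (0 < i)%N -> (2 < p)%N || (1 < i)%N ->
  c = 1 + p%:Z ^+ i * t -> ~~ (p%:Z %| t)%Z ->
  forall r, exists2 t' : int, c ^+ (p ^ r) = 1 + p%:Z ^+ (i + r) * t' & ~~ (p%:Z %| t')%Z.
Proof.
move=> pp i0 cond Ec nt; elim=> [|r [t' E nt']].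
  by exists t; rewrite ?expn0 ?expr1 ?addn0.
rewrite expnSr exprM.
have h1 : (0 < i + r)%N by rewrite addn_gt0 i0.
have h2 : (2 < p)%N || (1 < i + r)%N.
  by case/orP: cond => [->//|h]; rewrite (leq_trans h) ?leq_addr ?orbT.
have [t'' E' nt''] := @lte_step p (i + r) _ _ pp h1 h2 E nt'.
by exists t''; rewrite ?addnS.
Qed.

Lemma not_dvd_one_plus (p j : nat) (t : int) : prime p -> (0 < j)%N ->
  ~~ (p%:Z %| 1 + p%:Z ^+ j * t)%Z.
Proof.
move=> pp; case: j => [//|j] _; apply/negP => /dvdzP [w Ew].
have : (p%:Z %| 1)%Z.
  apply/dvdzP; exists (w - p%:Z ^+ j * t).
  by rewrite mulrBl -Ew exprS; ring.
by rewrite dvdz1 /= => /eqP p1; move: pp; rewrite p1.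
Qed.

Lemma cover (p j : nat) (b t : int) : prime p -> (0 < j)%N -> (2 < p)%N || (1 < j)%N ->
  b = 1 + p%:Z ^+ j * t -> ~~ (p%:Z %| t)%Z ->
  forall m N (v w : int), ~~ (p%:Z %| v)%Z -> (p%:Z ^+ j %| v - w)%Z ->
  exists2 i, (N <= i)%N & (p%:Z ^+ (j + m) %| v * b ^+ i - w)%Z.
Proof.
move=> pp j0 cond Eb nt; elim=> [|m IH] N v w nv Hvw.
  exists N => //; rewrite addn0.
  have [q Eq] := dvdzP Hvw.
  have [z Ez] := binom2 (p%:Z ^+ j * t) N.
  apply/dvdzP; exists (q + v * t * (N%:R + p%:Z ^+ j * t * z)).
  have -> : w = v - q * p%:Z ^+ j by rewrite -Eq; ring.
  by rewrite Eb Ez; ring.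
have [i Ni] := IH N v w nv Hvw.
move=> /dvdzP [s Es].
have [T ET nT] := @lte_iter p j b t pp j0 cond Eb nt m.
pose c0 := v * b ^+ i * T.
have nc0 : ~~ (p%:Z %| c0)%Z.
  rewrite /c0 !dvdz_prime_mul // negb_or nT andbT negb_or nv /=.
  by apply: dvdz_prime_exp => //; rewrite Eb; apply: (@not_dvd_one_plus p j).
have [u [v' Buv]] := Bezoutz p%:Z c0.
have g1 : gcdz p%:Z c0 = 1.
  by rewrite /gcdz; move: nc0; rewrite dvdzE -prime_coprime // => /eqP ->.
rewrite g1 in Buv.
pose rr := ((- (s * v')) %% p%:Z)%Z.
have rr0 : 0 <= rr by apply: modz_ge0; rewrite eqz_nat -lt0n prime_gt0.
pose q := ((- (s * v')) %/ p%:Z)%Z.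
have Err : rr = - (s * v') - q * p%:Z by rewrite /rr /q {2}(divz_eq (- (s * v')) p%:Z); ring.
have E1 : s + c0 * rr = p%:Z * (s * u - c0 * q).
  have -> : s + c0 * rr = p%:Z * (s * u - c0 * q) + s * (1 - (u * p%:Z + v' * c0))
    by rewrite Err; ring.
  by rewrite Buv subrr mulr0 addr0.
pose r := `|rr|%N.
have Er : r%:R = rr by rewrite natz /r gez0_abs.
have [z Ez] := binom2 (p%:Z ^+ (j + m) * T) r.
exists (i + p ^ m * r)%N; first by rewrite (leq_trans Ni) ?leq_addr.
have Ew : w = v * b ^+ i - s * p%:Z ^+ (j + m) by rewrite -Es; ring.
have E2 : v * b ^+ (i + p ^ m * r) - w = p%:Z ^+ (j + m) * (s + c0 * rr)
   + p%:Z ^+ (j + m) * p%:Z ^+ (j + m) * (v * b ^+ i * T ^+ 2 * z).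
  by rewrite exprD exprM ET Ez Er Ew /c0; ring.
rewrite E2 E1 addnS (exprS p%:Z (j + m)).
have jm : (0 < j + m)%N by rewrite addn_gt0 j0.
have HX : p%:Z ^+ (j + m) = p%:Z * p%:Z ^+ (j + m).-1 by rewrite -exprS prednK.
apply/dvdzP; exists (s * u - c0 * q + p%:Z ^+ (j + m).-1 * (v * b ^+ i * T ^+ 2 * z)).
rewrite HX; ring.
Qed.
End Helpers.

Lemma odd_sq a : odd a -> 2 ^ 2 %| a ^ 2 - 1.
Proof.
move=> oa.
have Ea : a = 2 * a./2 + 1 by rewrite -{1}(odd_double_half a) oa -muln2 /=; lia.
move: (a./2) Ea => h ->.
apply/dvdnP; exists (h * h + h); rewrite !expnS !expn0; nia.
Qed.

Lemma uo_le m a e : 1 < m -> 0 < e -> a ^ e = 1 %[mod m] -> unit_order m a <= e.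
Proof.
move=> m1 e0 H; rewrite /unit_order; case: insubP => [u _ Hu|] //=.
apply: dvdn_leq => //; rewrite order_dvdn; apply/eqP/val_inj.
rewrite FinRing.val_unitX FinRing.val_unit1 Hu /pi_mod -natrX.
by rewrite -(Zp_nat_mod m1) H Zp_nat_mod.
Qed.

Lemma nat_int_mod d x y : (x = y %[mod d]) <-> (Posz d %| (Posz x - Posz y)%R)%Z.
Proof.
rewrite -eqz_mod_dvd !modz_nat eqz_nat; split; first by move->.
by move/eqP.
Qed.

Lemma PX p m : Posz (p ^ m) = (Posz p ^+ m)%R.
Proof. by rewrite -natz natrX natz. Qed.

Lemma pi_mod_eq m x y : 1 < m -> (pi_mod m x = pi_mod m y) <-> x = y %[mod m].
Proof.
move=> m1; rewrite /pi_mod; split.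
  by move=> /(congr1 (fun z : 'Z_m => nat_of_ord z)) /=; rewrite !val_Zp_nat.
by move=> H; rewrite -(Zp_nat_mod m1) H Zp_nat_mod.
Qed.

Theorem lemma4p1 (p a n : nat) :
  prime p -> 0 < a -> ~~ (p %| a) -> 0 < n ->
  maxn p 3 <= unit_order (p ^ n) a ->
  forall y : nat,
    padic_closure p (fun s => exists2 k, 0 < k & s = a ^ k) y <->
    (0 < y /\ exists2 k, 0 < k & pi_mod (p ^ n) y = (pi_mod (p ^ n) a ^+ k)%R).
Proof.
move=> pp a0 pa n0 Hord y.
have p1 : 1 < p := prime_gt1 pp.
have pn1 : 1 < p ^ n by rewrite -(exp1n n) ltn_exp2r.
have Hnot1 : forall e, 0 < e -> a ^ e = 1 %[mod p ^ n] -> maxn p 3 <= e.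
  by move=> e e0 H; apply: leq_trans Hord (uo_le _ _ _ pn1 e0 H).
have a1 : 1 < a.
  rewrite ltn_neqAle a0 andbT; apply/eqP => a1'.
  have := Hnot1 1 erefl; rewrite -a1' exp1n => /(_ erefl).
  by rewrite geq_max andbF.
split.
  case=> y0 [py H].
  have [s [[k k0 ->] [_ Hs]]] := H y n y0 n0 (conj (leqnn y) erefl).
  split => //; exists k => //.
  rewrite /pi_mod -natrX; apply/(pi_mod_eq _ _ _ pn1).
  by rewrite Hs.
case=> y0 [k k0 Hy].
have Hy' : y = a ^ k %[mod p ^ n].
  by apply/(pi_mod_eq _ _ _ pn1); rewrite /pi_mod natrX; exact: Hy.
have pak : ~~ (p %| a ^ k) by rewrite Euclid_dvdX // negb_and pa.
have dp : p %| p ^ n by apply: dvdn_exp n0 (dvdnn p).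
have py : ~~ (p %| y).
  apply: contra pak => py.
  have E : y %% p = a ^ k %% p by rewrite -(modn_dvdm y dp) Hy' modn_dvdm.
  by rewrite /dvdn -E.
split=> //; split=> // x M x0 M0 [xy Hxy].
pose e := if p == 2 then 2 else p.-1.
have e0 : 0 < e by rewrite /e; case: ifP => _ //; rewrite ltn_predRL.
have ep : e < maxn p 3.
  rewrite /e; case: ifP => [/eqP->//|_].
  by rewrite leq_max prednK ?prime_gt0 // leqnn.
pose b := a ^ e.
have b1 : ~ (b = 1 %[mod p ^ n]).
  by move=> H; have := Hnot1 e e0 H; rewrite leqNgt ep.
have bpos : 0 < b by rewrite expn_gt0 a0.
have bne1 : b != 1 by apply/eqP => b1'; apply: b1; rewrite b1'.
have bm1 : 0 < b - 1 by rewrite subn_gt0 ltn_neqAle eq_sym bne1 bpos.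
have [t ct Et] := pfactor_coprime pp bm1.
have hj : (if p == 2 then 2 else 1) <= logn p (b - 1).
  rewrite -pfactor_dvdn //; case: ifP => [/eqP p2 | p2].
    have oa : odd a by move: pa; rewrite p2 dvdn2 negbK.
    by rewrite /b /e p2 /=; apply: odd_sq.
  have ap : a ^ p = a * b by rewrite /b /e p2 -expnS prednK // prime_gt0.
  have := fermat_little a pp; rewrite ap => /eqP.
  rewrite eqn_mod_dvd ?leq_pmulr // -{2}(muln1 a) -mulnBr Euclid_dvdM //.
  by rewrite (negbTE pa) expn1.
set j := logn p (b - 1) in Et hj.
have j0 : 0 < j by apply: leq_trans hj; case: ifP.
have cond : (2 < p) || (1 < j).
  move: hj; case: ifP => [_ -> | /negbT p2 _]; first by rewrite orbT.
  by rewrite ltn_neqAle eq_sym p2 p1.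
have jn : j < n.
  rewrite ltnNge; apply/negP => nj; apply: b1; apply/eqP.
  by rewrite eqn_mod_dvd // Et dvdn_mull // dvdn_exp2l.
have Eb' : b = t * p ^ j + 1 by rewrite -Et subnK.
have Ebz : Posz b = (1 + (Posz p) ^+ j * Posz t)%R.
  by rewrite {1}Eb' PoszD PoszM PX addrC mulrC.
have nt : ~~ (Posz p %| Posz t)%Z by rewrite dvdzE /= -prime_coprime.
have nv : ~~ (Posz p %| Posz (a ^ k))%Z by rewrite dvdzE.
have dpj : p ^ j %| p ^ n by rewrite dvdn_exp2l // ltnW.
have Hvw : (Posz p ^+ j %| (Posz (a ^ k) - Posz y)%R)%Z.
  rewrite -PX; apply/nat_int_mod.
  by rewrite -(modn_dvdm (a ^ k) dpj) -Hy' modn_dvdm.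
have [i xi Hi] := @cover p j (Posz b) (Posz t) pp j0 cond Ebz nt M x _ _ nv Hvw.
rewrite -PX -PX -PoszM /b -expnM -expnD in Hi.
move/nat_int_mod: Hi => Hi.
have dpM : p ^ M %| p ^ (j + M) by rewrite dvdn_exp2l // leq_addl.
exists (a ^ (k + e * i)); split; first by exists (k + e * i) => //; rewrite addn_gt0 k0.
split.
  apply: leq_trans (ltnW (ltn_expl _ a1)).
  exact: leq_trans xi (leq_trans (leq_pmull i e0) (leq_addl k _)).
by rewrite -(modn_dvdm (a ^ (k + e * i)) dpM) Hi modn_dvdm.
Qed.
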